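(* Let $\bar\tau>0$, let $h$ be any delay kernel as in the context, with Laplace transform $H$, and let $\alpha,\beta\in\mathbb{R}$ with $\beta<\alpha-1$. Then the characteristic equation $$\Big(z+\tfrac{1}{\bar\tau}\Big)^4-\alpha\Big(z+\tfrac{1}{\bar\tau}\Big)^2\tfrac{1}{\bar\tau^2}H(z)^2+\tfrac{\beta}{\bar\tau^4}H(z)^4=0$$ has a positive real root; hence the equilibrium is unstable, regardless of the kernel $h$.
   Context: A delay kernel is either a probability density $h:[0,\infty)\to[0,\infty)$ with $\int_0^\infty h=1$ and finite mean $\tau=\int_0^\infty t\,h(t)\,dt>0$, or the Dirac measure $\delta(t-\tau)$, $\tau>0$. Its Laplace transform is $H(z)=\int_0^\infty h(t)e^{-zt}\,dt$ (for the Dirac measure, $H(z)=e^{-z\tau}$), defined for $\operatorname{Re} z\ge 0$. The displayed equation is the characteristic equation of the linearization at an equilibrium of two coupled Wilson–Cowan excitatory/inhibitory pairs with time constant $\bar\tau>0$ and distributed delays; $\alpha,\beta$ are real coefficients determined by coupling weights and sigmoid slopes. The equilibrium is called unstable if some root has positive real part. *)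

(* Defs.v *)
From HB Require Import structures.
From mathcomp Require Import all_boot all_order all_algebra.
From mathcomp Require Import all_classical all_reals all_analysis.
Set Implicit Arguments. Unset Strict Implicit. Unset Printing Implicit Defensive.
Import Order.TTheory GRing.Theory Num.Theory.
Import numFieldNormedType.Exports.
Local Open Scope classical_set_scope.
Local Open Scope ring_scope.

(* A delay kernel: either a probability density h on [0,oo), or a Dirac mass at tau. *)
Inductive delay_kernel (R : realType) :=
| Density of (R -> R)
| Dirac of R.

Definition half_line (R : realType) : set R := `[0%R, +oo[%classic.

Definition is_delay_kernel (R : realType) (k : delay_kernel R) : Prop :=
  match k with
  | Density h =>
      measurable_fun ((@half_line R)) h /\
      (forall t, 0 <= t -> 0 <= h t) /\
      (\int[lebesgue_measure]_(t in (@half_line R)) (h t)%:E = 1)%E /\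
      (\int[lebesgue_measure]_(t in (@half_line R)) (t * h t)%:E < +oo)%E /\
      (0 < \int[lebesgue_measure]_(t in (@half_line R)) (t * h t)%:E)%E
  | Dirac tau => 0 < tau
  end.

Definition laplace (R : realType) (k : delay_kernel R) (z : R) : R :=
  match k with
  | Density h =>
      fine (\int[lebesgue_measure]_(t in (@half_line R)) (h t * expR (- (z * t)))%:E)
  | Dirac tau => expR (- (z * tau))
  end.

Definition char_fun (R : realType) (taub alpha beta : R) (k : delay_kernel R) (z : R) : R :=
  let w := z + taub^-1 in
  let H := laplace k z in
  w ^+ 4 - alpha * w ^+ 2 * (taub ^+ 2)^-1 * H ^+ 2 + beta / taub ^+ 4 * H ^+ 4.

(* Main.v *)
Require Import Defs.
From HB Require Import structures.
From mathcomp Require Import all_boot all_order all_algebra.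
From mathcomp Require Import all_classical all_reals all_analysis.
From mathcomp Require Import measurable_realfun lebesgue_integral_under.
From mathcomp Require Import ring lra.
Import Order.TTheory GRing.Theory Num.Def Num.Theory.
Import numFieldNormedType.Exports.
Local Open Scope classical_set_scope.
Local Open Scope ring_scope.

Section S.
Variable R : realType.
Notation mu := (@lebesgue_measure R).

Lemma mhl : measurable (@half_line R).
Proof. exact: measurable_itv. Qed.

Lemma mexp (m : R) : measurable_fun (@half_line R) (fun t : R => expR (- (m * t))).
Proof.
apply: measurable_funTS; apply: measurableT_comp => //.
apply: measurableT_comp => //; exact: measurable_funM.
Qed.

Lemma cexp (y : R) : continuous (fun z : R => expR (- (`|z| * y))).
Proof.
move=> z; apply: continuous_comp; last exact: continuous_expR.
apply: continuousN; apply: (@continuousM _ _ (fun z : R => `|z|) (fun _ => y)); last exact: cst_continuous.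
exact: norm_continuous.
Qed.
Lemma inhl (t : R) : half_line t -> 0 <= t.
Proof. by rewrite /half_line /= in_itv /= andbT. Qed.

Lemma bnd (h : R -> R) (z t : R) : 0 <= t -> (forall t, 0 <= t -> 0 <= h t) ->
  `|h t * expR (- (`|z| * t))| <= h t.
Proof.
move=> t0 h0; rewrite normrM (ger0_norm (h0 _ t0)) gtr0_norm ?expR_gt0 //.
apply: ler_piMr; first exact: h0.
by rewrite expR_le1 oppr_le0 mulr_ge0.
Qed.

Lemma dens (h : R -> R) : is_delay_kernel (Density h) ->
  let G := fun z : R => Rintegral mu (@half_line R) (fun t => h t * expR (- (`|z| * t))) in
  [/\ continuous G, (forall z, 0 <= z -> laplace (Density h) z = G z), G 0 = 1 &
  (forall z : R, 0 <= G z <= 1)].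
Proof.
move=> [mh [h0 [h1 _]]] G.

have mB := mhl.
have hint : mu.-integrable (@half_line R) (EFin \o h).
  apply/integrableP; split; first exact/measurable_EFinP.
  under eq_integral => t /set_mem /inhl t0 do rewrite /= ger0_norm ?h0 //.
  by rewrite h1 ltry.
have mf (z : R) : measurable_fun (@half_line R) (fun t => h t * expR (- (`|z| * t))).
  exact: measurable_funM mh (mexp _).
have fint (z : R) : mu.-integrable (@half_line R) (EFin \o (fun t => h t * expR (- (`|z| * t)))).
  apply: le_integrable hint; first exact: measurable_itv.
    apply/measurable_EFinP; exact (mf z).
  move=> t; rewrite /half_line /= in_itv /= andbT => t0.
  rewrite lee_fin (ger0_norm (h0 _ t0)); exact: bnd.
split.
- move=> a.
  have := @continuity_under_integral R _ _ mu (fun z t => h t * expR (- (`|z| * t)))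
    (@half_line R) mB (a - 1) (a + 1) (fun x _ => fint x) _ h hint _.
  apply.
  - apply: (aeW mu) => y _ x _; apply: (@continuousM _ _ (fun _ => h y) (fun x0 : R => expR (- (`|x0| * y)))); first exact: cst_continuous.
    exact: cexp.
  - move=> x _; apply: (aeW mu) => y; rewrite /half_line /= in_itv /= andbT => y0.
    exact: bnd.
  - rewrite inE /= in_itv /=; apply/andP; split; [rewrite ltrBlDr|]; rewrite ltrDl ltr01 //.
- by move=> z z0; rewrite /G /Rintegral /laplace ger0_norm.
- rewrite /G /Rintegral.
  have -> : (fun t => ((h t * expR (- (`|0:R| * t)))%:E)) = (fun t => (h t)%:E).
    by apply/funext => t; rewrite normr0 mul0r oppr0 expR0 mulr1.
  by rewrite h1.
- move=> z; rewrite /G /Rintegral.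
have I0 : (0 <= \int[mu]_(t in (@half_line R)) (h t * expR (- (`|z| * t)))%:E)%E.
  apply: integral_ge0 => t /inhl t0; rewrite lee_fin mulr_ge0 ?h0 // expR_ge0.
have I1 : (\int[mu]_(t in (@half_line R)) (h t * expR (- (`|z| * t)))%:E <= 1)%E.
  rewrite -h1; apply: ge0_le_integral => //.
  - move=> t /inhl t0; rewrite lee_fin mulr_ge0 ?h0 // expR_ge0.
  - apply/measurable_EFinP; exact (mf z).
  - apply/measurable_EFinP; exact mh.
  - move=> t /inhl t0; rewrite lee_fin; have := @bnd h z t t0 h0; apply: le_trans; exact: ler_norm.
move: I0 I1; case: (\int[mu]_(t in _) _)%E => [r| |] //=.
by rewrite !lee_fin => -> ->.
Qed.
Lemma cD (f g : R -> R) : continuous f -> continuous g -> continuous (fun x => f x + g x).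
Proof. by move=> cf cg x; exact: (@continuousD R R^o R f g x (cf x) (cg x)). Qed.
Lemma cB (f g : R -> R) : continuous f -> continuous g -> continuous (fun x => f x - g x).
Proof. by move=> cf cg x; exact: (@continuousB R R^o R f g x (cf x) (cg x)). Qed.
Lemma cM (f g : R -> R) : continuous f -> continuous g -> continuous (fun x => f x * g x).
Proof. by move=> cf cg x; exact: (@continuousM R R f g x (cf x) (cg x)). Qed.
Lemma cN (f : R -> R) : continuous f -> continuous (fun x => - f x).
Proof. by move=> cf x; exact: (@continuousN R R^o R f x (cf x)). Qed.
Lemma cC (a : R) : continuous (fun _ : R => a).
Proof. by move=> x; apply: cst_continuous. Qed.
Lemma cI : continuous (fun x : R => x).
Proof. by move=> x; apply: cvg_id. Qed.

Lemma Gex (k : delay_kernel R) : is_delay_kernel k -> exists G : R -> R,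
  [/\ continuous G, (forall z, 0 <= z -> laplace k z = G z), G 0 = 1 &
  (forall z : R, 0 <= G z <= 1)].
Proof.
case: k => [h|tau] hk.
  by have H := @dens h hk; eexists; exact: H.
exists (fun z => expR (- (`|z| * tau))); split.
- exact: cexp.
- by move=> z z0 /=; rewrite ger0_norm.
- by rewrite normr0 mul0r oppr0 expR0.
- move=> z; rewrite expR_ge0 /= expR_le1 oppr_le0 mulr_ge0 //.
  by rewrite ltW.
Qed.
End S.

Lemma poly_pos (R : realType) (a b u N M : R) : `|a| <= M -> `|b| <= M -> 0 <= u <= 1 ->
  N = M + 2 -> 0 < N^+4 - a * N^+2 * u + b * u^+2.
Proof.
move=> ha hb /andP[u0 u1] hN.
have M0 : 0 <= M by apply: le_trans ha.
have au : a * u <= M.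
  apply: le_trans (ler_norm _) _; rewrite normrM (ger0_norm u0).
  apply: le_trans ha; exact: ler_piMr.
have bu : - M <= b * u ^+ 2.
  have : `|b * u ^+ 2| <= M.
    rewrite normrM normrX (ger0_norm u0).
    apply: le_trans hb; apply: ler_piMr; first by [].
    by rewrite exprn_ile1.
  by rewrite ler_norml => /andP[].
have N2 : 2 <= N by rewrite hN lerDr.
have e : a * N ^+ 2 * u = N ^+ 2 * (a * u) by rewrite mulrAC mulrC.
rewrite e.
have h1 : N ^+ 2 * (a * u) <= N ^+ 2 * M by apply: ler_wpM2l; [exact: sqr_ge0|].
rewrite hN in h1 *.
nra.
Qed.

Theorem theorem2 (R : realType) (taub alpha beta : R) (k : delay_kernel R) :
  0 < taub -> is_delay_kernel k -> beta < alpha - 1 ->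
  exists z : R, 0 < z /\ char_fun taub alpha beta k z = 0.
Proof.
move=> tp hk hab.
have [G [cG eG G0 G01]] := @Gex R k hk.
set c := taub^-1.
have c0 : 0 < c by rewrite /c invr_gt0.
pose F z := let w := z + c in let g := G z in
  w * w * (w * w) - alpha * (w * w) * (c * c) * (g * g) + beta * (c * c * (c * c)) * (g * g * (g * g)).
have eF z : 0 <= z -> char_fun taub alpha beta k z = F z.
  move=> z0; rewrite /char_fun /F eG // -!exprVn -/c; ring.
have cF : continuous F.
  rewrite /F /=.
  repeat first [apply: (@cD R) | apply: (@cN R) | apply: (@cB R) | apply: (@cM R) | exact: (@cC R) | exact: (@cI R) | exact: cG].
have F0 : F 0 < 0.
  rewrite /F /= G0 add0r !mulr1.
  have -> : c * c * (c * c) - alpha * (c * c) * (c * c) + beta * (c * c * (c * c)) =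
    (c * c * (c * c)) * (1 - alpha + beta) by ring.
  rewrite pmulr_rlt0 ?mulr_gt0 //; lra.
set M := `|alpha| + `|beta|.
set z1 := (M + 1) * c.
have z10 : 0 < z1 by rewrite /z1 mulr_gt0 // /M ltr_wpDl // addr_ge0.
have F1 : 0 < F z1.
  have := @poly_pos R alpha beta (G z1 ^+ 2) (M + 2) M.
  rewrite /M ler_wpDr // ler_wpDl // => /(_ isT isT).
  have [g0 g1] := andP (G01 z1).
  rewrite sqr_ge0 /= exprn_ile1 // => /(_ isT erefl) P.
  have -> : F z1 = (c * c * (c * c)) * ((M + 2) ^+ 4 - alpha * (M + 2) ^+ 2 * G z1 ^+ 2 +
    beta * (G z1 ^+ 2) ^+ 2) by rewrite /F /z1 /=; ring.
  by rewrite mulr_gt0 // !mulr_gt0.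
have [x xin Fx] : exists2 x, x \in `[0, z1] & F x = 0.
  apply: IVT; first exact: ltW.
    exact: continuous_subspaceT cF.
  rewrite ge_min le_max (ltW F0) (ltW F1) //.
  by rewrite orbT.
have x0 : 0 <= x by move: xin; rewrite in_itv /= => /andP[].
exists x; split; last by rewrite eF.
rewrite lt_neqAle x0 andbT; apply/eqP => ex.
have : F 0 = F x by rewrite ex.
by rewrite Fx => e0; move: F0; rewrite e0 ltxx.
Qed.
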